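(* Let $C>0$ and let $\mu_i$ ($i\in\mathbb{N}$) and $\mu$ be finite Borel measures on $\mathbb{R}$ supported on the compact interval $[0,C]$. Suppose that $\mu_i$ converges weakly to $\mu$ and that there is $\delta>0$ with $\det(\mu_i)\geq\delta$ for all $i$. Then $\lim_{i\to\infty}\mu_i(\{0\}) = \mu(\{0\})$.
   Context: Weak convergence $\mu_i\to\mu$ means $\lim_i\int f\,d\mu_i=\int f\,d\mu$ for every bounded continuous $f\colon\mathbb{R}\to\mathbb{C}$. The Fuglede-Kadison determinant of a finite compactly supported Borel measure $\nu$ on $\mathbb{R}$ is $\det(\nu)=\exp\int_{(0,\infty)}\ln(t)\,d\nu(t)$ (interpreted as $0$ if the integral is $-\infty$). *)

(* Defs.v *)
From HB Require Import structures.
From mathcomp Require Import all_boot all_order all_algebra.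
From mathcomp Require Import all_classical all_reals all_analysis.
Set Implicit Arguments. Unset Strict Implicit. Unset Printing Implicit Defensive.
Import Order.TTheory GRing.Theory Num.Theory.
Import numFieldNormedType.Exports.
Local Open Scope classical_set_scope.
Local Open Scope ring_scope.
Local Open Scope ereal_scope.

Definition supported_on (R : realType) (C : R)
    (nu : {measure set R -> \bar R}) : Prop :=
  nu (~` `[0%R, C]) = 0.

Definition weak_cvg (R : realType) (mu_ : nat -> {measure set R -> \bar R})
    (mu : {measure set R -> \bar R}) : Prop :=
  forall f : R -> R, continuous f -> (exists M : R, forall x, (`|f x| <= M)%R) ->
    (fun i => \int[mu_ i]_x (f x)%:E) @ \oo --> \int[mu]_x (f x)%:E.

(* Fuglede-Kadison determinant: exp (\int_{(0,oo)} ln t dnu), and 0 if the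
   integral is -oo. (The +oo case cannot occur for compactly supported finite
   measures; it is mapped to +oo.) *)
Definition fk_det (R : realType) (nu : {measure set R -> \bar R}) : \bar R :=
  match \int[nu]_(t in `]0%R, +oo[) (ln t)%:E with
  | r%:E => (expR r)%:E
  | +oo => +oo
  | -oo => 0
  end.

(* Main.v *)
Require Import Defs.
From HB Require Import structures.
From mathcomp Require Import all_boot all_order all_algebra.
From mathcomp Require Import all_classical all_reals all_analysis.
Import Order.TTheory GRing.Theory Num.Theory.
Import numFieldNormedType.Exports.
Local Open Scope classical_set_scope.
Local Open Scope ring_scope.
From mathcomp Require Import measurable_realfun ring lra.
Module P1.
Local Open Scope classical_set_scope.
Local Open Scope ring_scope.
Set Implicit Arguments.
Section G.
Context {R : realType}.
Definition gt (eps : R) (x : R) : R := Num.min 1 (Num.max 0 (1 - x / eps)).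

Lemma gt_cont eps : continuous (gt eps).
Proof.
move=> x.
apply: (@continuous_min R R (cst 1) (fun x => Num.max 0 (1 - x / eps))).
  exact: cst_continuous.
apply: (@continuous_max R R (cst 0) (fun x => (1 - x / eps))).
  exact: cst_continuous.
apply: continuousB; first exact: cst_continuous.
apply: continuousM; [by move=> y; exact: cvg_id|exact: cst_continuous].
Qed.

Lemma gt_ge0 eps x : 0 <= gt eps x.
Proof. by rewrite /gt le_min ler01 le_max lexx. Qed.
Lemma gt_le1 eps x : gt eps x <= 1.
Proof. by rewrite /gt ge_min lexx. Qed.
Lemma gt0 eps : gt eps 0 = 1.
Proof. by rewrite /gt mul0r subr0 (max_idPr ler01) minxx. Qed.
Lemma gt_out eps x : 0 < eps -> eps < x -> gt eps x = 0.
Proof.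
move=> e0 ex; rewrite /gt (max_idPl _) ?min_r ?ler01//.
by rewrite subr_le0 ler_pdivlMr// mul1r ltW.
Qed.
End G.
End P1.
Import P1.

Module P2.
Local Open Scope classical_set_scope.
Local Open Scope ring_scope.
Local Open Scope ereal_scope.
Local Open Scope classical_set_scope.
Set Implicit Arguments.
Section M.
Context {R : realType} (C : R) (nu : {finite_measure set R -> \bar R})
  (hs : supported_on C nu).
Implicit Types eps : R.

Lemma mgt eps : measurable_fun [set: R] (fun x => (gt eps x)%:E).
Proof. apply/measurable_EFinP; exact: continuous_measurable_fun (gt_cont eps). Qed.

Lemma L1 eps : nu [set 0%R] <= \int[nu]_x (gt eps x)%:E.
Proof.
apply: (@le_trans _ _ (\int[nu]_(x in [set 0%R]) (gt eps x)%:E)).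
  rewrite (@eq_integral _ _ _ nu _ (cst 1)); last first.
    by move=> x; rewrite inE /= => ->; rewrite gt0.
  by rewrite integral_cst ?mul1e//; exact: measurable_set1.
apply: (@ge0_subset_integral _ _ _ nu [set 0%R] setT (measurable_set1 _) measurableT) => //.
  exact: mgt.
by move=> x _; rewrite lee_fin gt_ge0.
Qed.

Lemma L2 eps : (0 < eps)%R ->
  \int[nu]_x (gt eps x)%:E <= nu [set 0%R] + nu (`]0%R, eps])%classic.
Proof.
move=> e0.
apply: (@le_trans _ _ (\int[nu]_x (\1_(`]-oo, eps] : set R) x)%:E)).
  apply: ge0_le_integral => //.
  - by move=> x _; rewrite lee_fin gt_ge0.
  - exact: mgt.
  - apply/measurable_EFinP; apply: measurable_indic; exact: measurable_itv.
  move=> x _; rewrite lee_fin indicE.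
  have [xin|xin] := boolP (x \in (`]-oo, eps] : set R)).
    exact: gt_le1.
  rewrite gt_out//; move: xin; rewrite notin_setE /= in_itv /= => xin.
  by rewrite real_ltNge ?num_real//; apply/negP.
rewrite integral_indic ?setIT; last exact: measurable_itv.
have sub : (`]-oo, eps] : set R) `<=` (~` `[0%R, C]) `|` ([set 0%R] `|` `]0%R, eps]).
  move=> x /=; rewrite !in_itv /= => xe.
  have [x0|x0|->] := ltgtP x 0%R.
  - by left.
  - by right; right.
  - by right; left.
apply: (le_trans (le_measure _ _ _ sub)); rewrite ?inE.
- exact: measurable_itv.
- apply: measurableU; first by apply: measurableC; exact: measurable_itv.
  apply: measurableU; [exact: measurable_set1|exact: measurable_itv].
apply: (le_trans (measureU2 _ _ _)).
- by apply: measurableC; exact: measurable_itv.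
- apply: measurableU; [exact: measurable_set1|exact: measurable_itv].
rewrite -[nu [set 0%R] + _]add0e; apply: leeD.
  by rewrite le_eqVlt; apply/orP; left; apply/eqP; exact: hs.
apply: measureU2; [exact: measurable_set1|exact: measurable_itv].
exact: measurableT.
Qed.
End M.
End P2.
Import P2.

Module P3.
Local Open Scope classical_set_scope.
Local Open Scope ring_scope.
Local Open Scope ereal_scope.
Local Open Scope classical_set_scope.
Set Implicit Arguments.
Section M.
Context {R : realType} (C : R) (nu : {finite_measure set R -> \bar R})
  (hs : supported_on C nu).
Implicit Types eps : R.

Let D : set R := `]0%R, +oo[.
Let mD : measurable D. Proof. exact: measurable_itv. Qed.
Let f := fun t : R => (ln t)%:E.
Let mf : measurable_fun D f.
Proof. apply/measurable_EFinP; apply: (measurable_funS measurableT) => //; exact: measurable_ln. Qed.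

Lemma Pbound M : nu setT <= M%:E ->
  \int[nu]_(x in D) f^\+ x <= (Num.max 0 (ln C) * M)%:E.
Proof.
move=> hM.
have c0 : (0 <= Num.max 0 (ln C))%R by rewrite le_max lexx.
apply: (@le_trans _ _ (\int[nu]_(x in D) (cst (Num.max 0 (ln C))%:E) x)).
  apply: ae_ge0_le_integral => //.
  - exact: measurable_funepos.
  exists (~` `[0%R, C]); split.
  - by apply: measurableC; exact: measurable_itv.
  - exact: hs.
  move=> x /= hx; apply: contra_notP hx => xC Dx.
  move: Dx; rewrite /D /= in_itv /= andbT => x0.
  have := contrapT xC; rewrite in_itv /= => /andP[_ xC1].
  rewrite funeposE ge_max; apply/andP; split; last by rewrite lee_fin.
  rewrite /f lee_fin le_max; apply/orP; right.
  by rewrite ler_ln// posrE//; exact: lt_le_trans xC1.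
rewrite integral_cst// EFinM lee_wpmul2l ?lee_fin//.
apply: le_trans hM; apply: le_measure => //; rewrite inE//.
Qed.

Lemma Nbound eps : (0 < eps)%R -> (eps <= 1)%R ->
  (- ln eps)%:E * nu `]0%R, eps] <= \int[nu]_(x in D) f^\- x.
Proof.
move=> e0 e1.
have l0 : (0 <= - ln eps)%R by rewrite oppr_ge0 ln_le0.
have mI : measurable (`]0%R, eps] : set R) by exact: measurable_itv.
have -> : nu `]0%R, eps] = \int[nu]_(x in D) (\1_(`]0%R, eps] : set R) x)%:E.
  rewrite integral_indic//; congr (nu _); apply/seteqP; split => x /=.
    rewrite !in_itv /= => /andP[x0 xe]; split => //; exact/andP.
  by case.
rewrite -ge0_integralZl_EFin//; last first.
  apply/measurable_EFinP; exact: measurable_indic.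
apply: ge0_le_integral => //.
- by move=> x _; rewrite mule_ge0// lee_fin.
- apply/measurable_EFinP; apply: measurable_funM => //; exact: measurable_indic.
- exact: measurable_funeneg.
move=> x; rewrite /D /= in_itv /= andbT => x0.
rewrite funenegE indicE; have [xin|xin] := boolP (x \in (`]0%R, eps] : set R)).
  rewrite /= mulr1n mule1 le_max lee_fin lerN2 ler_ln ?posrE//.
  by move: xin; rewrite inE /= in_itv /= => /andP[_ ->].
by rewrite /= mule0 le_max lexx orbT.
Qed.

Lemma L4 delta M eps : (0 < delta)%R -> (0 < eps)%R -> (eps <= 1)%R ->
  delta%:E <= fk_det nu -> nu setT <= M%:E ->
  (- ln eps)%:E * nu `]0%R, eps] <= (Num.max 0 (ln C) * M - ln delta)%:E.
Proof.
move=> d0 e0 e1 hd hM.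
have hP := @Pbound M hM; have hN := @Nbound eps e0 e1.
move: hd; rewrite /fk_det integralE.
have P0 : 0 <= \int[nu]_(x in D) f^\+ x by apply: integral_ge0 => x _; exact: funepos_ge0.
have N0 : 0 <= \int[nu]_(x in D) f^\- x by apply: integral_ge0 => x _; exact: funeneg_ge0.
rewrite /D /f in hP hN P0 N0 *.
move: hP hN P0 N0.
case: (\int[nu]_(x in _) _ ^\+ x) => [p| |] //; case: (\int[nu]_(x in _) _ ^\- x) => [n| |] //.
- move=> hP hN _ _ /=; rewrite lee_fin => hd.
  apply: (le_trans hN); rewrite lee_fin.
  have : (ln delta <= p - n)%R by rewrite -[(p - n)%R]expRK ler_ln ?posrE ?expR_gt0.
  move: hP; rewrite lee_fin => hP. lra.
- by move=> _ _ _ _ /=; rewrite lee_fin leNgt d0.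
Qed.
End M.
End P3.
Import P3.

Module P4.
Local Open Scope classical_set_scope.
Local Open Scope ring_scope.
Local Open Scope ereal_scope.
Local Open Scope classical_set_scope.
Set Implicit Arguments.

Lemma ecvg_near {R : realType} (u : nat -> \bar R) (l e : R) :
  u @ \oo --> l%:E -> (0 < e)%R ->
  \forall i \near \oo, exists r, u i = r%:E /\ (l - e <= r)%R /\ (r <= l + e)%R.
Proof.
move=> /fine_cvgP [fu cu] e0; move/cvgrPdist_le : cu => /(_ e e0) cu.
near=> i.
have fi : u i \is a fin_num by near: i.
have : (`|l - fine (u i)| <= e)%R by near: i.
rewrite ler_norml => /andP[h1 h2].
exists (fine (u i)); split; first by rewrite fineK.
split; lra.
Unshelve. all: by end_near. Qed.

Lemma fm_real {R : realType} (nu : {finite_measure set R -> \bar R}) (A : set R) :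
  measurable A -> exists r, nu A = r%:E /\ (0 <= r)%R.
Proof.
move=> mA; exists (fine (nu A)); rewrite fineK ?fin_num_measure//; split => //.
by rewrite fine_ge0.
Qed.
End P4.
Import P4.

Unset Implicit Arguments.

Theorem mainTheorem3 (R : realType) (C : R) (hC : 0 < C)
    (mu_ : nat -> {finite_measure set R -> \bar R})
    (mu : {finite_measure set R -> \bar R})
    (hsupp_ : forall i, supported_on C (mu_ i))
    (hsupp : supported_on C mu)
    (hweak : weak_cvg mu_ mu)
    (delta : R) (hdelta : 0 < delta)
    (hdet : forall i, (delta%:E <= fk_det (mu_ i))%E) :
  (fun i => mu_ i [set 0]) @ \oo --> mu [set 0].
Proof.
have [mT0 [hmT _]] := fm_real mu measurableT.
have hT : (fun i => mu_ i setT) @ \oo --> mT0%:E.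
  have hb : exists M : R, forall x : R, `|cst 1%R x| <= M.
    by exists 1 => x; rewrite normr1.
  have := hweak (cst 1%R) (@cst_continuous _ _ _) hb.
  have E (nu : {finite_measure set R -> \bar R}) :
      (\int[nu]_x (cst 1%R x)%:E = nu setT)%E.
    by rewrite (@integral_cst _ _ _ nu setT measurableT 1%E) mul1e.
  rewrite E -hmT; under eq_fun do rewrite E; by [].
set M := (mT0 + 1)%R.
have nearM : \forall i \near \oo, (mu_ i setT <= M%:E)%E.
  near=> i.
  have [r [-> [_ h]]] : exists r, mu_ i setT = r%:E /\ (mT0 - 1 <= r)%R /\ (r <= mT0 + 1)%R.
    by near: i; exact: ecvg_near hT ltr01.
  by rewrite lee_fin.
have [a [ha a0]] := fm_real mu (measurable_set1 0%R).
rewrite ha; apply/fine_cvgP; split.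
  by near=> i; apply: fin_num_measure; exact: measurable_set1.
apply/cvgrPdist_le => e e0.
set K := (Num.max 0 (ln C) * M - ln delta)%R.
set L := (2 * `|K| / e + 1)%R.
have L0 : 0 < L.
  have h : 0 <= 2 * `|K| / e by rewrite divr_ge0 ?mulr_ge0 // ltW.
  rewrite /L; lra.
pose F (n : nat) : set R := (`]0%R, n.+1%:R^-1])%classic.
have mF n : measurable (F n) by exact: measurable_itv.
have capF : \bigcap_n F n = set0.
  apply/seteqP; split => x // hx.
  have : 0 < x by have := hx 0%N (I : setT 0%N); rewrite /F /= in_itv /= => /andP[].
  move=> x0.
  have [N _ HN] := near_infty_natSinv_lt (PosNum x0).
  have := HN N (leqnn N); have := hx N (I : setT N); rewrite /F /= in_itv /= => /andP[_ h1] h2.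
  by move: (le_lt_trans h1 h2); rewrite ltxx.
have hF : (mu \o F) @ \oo --> 0%:E.
  have := @nonincreasing_cvg_mu _ _ _ mu F _ mF _ _.
  rewrite capF measure0; apply.
  - by rewrite ltey_eq fin_num_measure.
  - exact: measurable0.
  - move=> p q pq; apply/subsetPset => x; rewrite /F /= !in_itv /= => /andP[x0 xq].
    rewrite x0 /=; apply: (le_trans xq); rewrite lef_pV2 ?posrE ?ltr0Sn// ler_nat ltnS //.
have [n hn] : exists n, (mu (F n) <= (e / 2)%:E)%E.
  have e20 : 0 < e / 2 by rewrite divr_gt0.
  have [N _ /(_ N (leqnn N))] := @ecvg_near _ _ _ _ hF e20.
  move=> [r [hr [_ h]]]; exists N; rewrite /= in hr; rewrite hr lee_fin; lra.
pose eps := Num.min (n.+1%:R^-1) (expR (- L)).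
have eps0 : 0 < eps by rewrite lt_min invr_gt0 ltr0Sn expR_gt0.
have epsn : eps <= n.+1%:R^-1 by rewrite ge_min lexx.
have eps1 : eps <= 1.
  apply: (le_trans epsn); rewrite invr_le1 ?ler1n ?ltr0Sn //; exact: unitf_gt0.
have lneps : L <= - ln eps.
  have : ln eps <= - L.
    by rewrite -[X in _ <= X]expRK ler_ln ?posrE ?expR_gt0 // ge_min lexx orbT.
  lra.
have mI : measurable (`]0%R, eps])%classic by exact: measurable_itv.
have mu_eps : (mu (`]0%R, eps])%classic <= (e / 2)%:E)%E.
  apply: le_trans hn; apply: le_measure; rewrite ?inE //.
  move=> x /=; rewrite /F /= !in_itv /= => /andP[-> xe] /=; exact: le_trans epsn.
have hb : exists M : R, forall x : R, `|gt eps x| <= M.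
  by exists 1 => x; rewrite ger0_norm ?gt_ge0 ?gt_le1.
have hg := hweak (gt eps) (gt_cont eps) hb.
have [w [hw w0]] := fm_real mu mI.
have Gup := L2 hsupp eps eps0.
have Glo := L1 mu eps.
have Gfin : (\int[mu]_x (gt eps x)%:E)%E \is a fin_num.
  rewrite ge0_fin_numE; last by apply: integral_ge0 => x _; rewrite lee_fin gt_ge0.
  by apply: (le_lt_trans Gup); rewrite ha hw -EFinD ltry.
rewrite -(fineK Gfin) in hg Gup Glo.
set l := fine _ in hg Gup Glo.
rewrite ha hw -EFinD lee_fin in Gup.
rewrite ha lee_fin in Glo.
move: mu_eps; rewrite hw lee_fin => mu_eps.
have e20 : 0 < e / 2 by rewrite divr_gt0.
have nearG := @ecvg_near _ _ _ _ hg e20.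
near=> i.
have [x [hx x0]] := fm_real (mu_ i) (measurable_set1 0%R).
have [z [hz z0]] := fm_real (mu_ i) mI.
have [y [hy [hy1 hy2]]] : exists y, (\int[mu_ i]_x (gt eps x)%:E)%E = y%:E /\ (l - e / 2 <= y)%R /\ (y <= l + e / 2)%R.
  by near: i.
have hMi : (mu_ i setT <= M%:E)%E by near: i.
have A := L1 (mu_ i) eps; rewrite hx hy lee_fin in A.
have Dd := L2 (hsupp_ i) eps eps0; rewrite hx hy hz -EFinD lee_fin in Dd.
have E := L4 (hsupp_ i) delta M eps hdelta eps0 eps1 (hdet i) hMi; rewrite hz -EFinM lee_fin in E.
have ze : z <= e / 2.
  have KK : K <= `|K| := ler_norm K.
  have h1 : L * z <= `|K|.
    apply: le_trans KK; apply: le_trans E; exact: ler_wpM2r.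
  have eq : e / 2 * L = `|K| + e / 2 by rewrite /L; field; rewrite gt_eqF.
  have : z * L <= e / 2 * L by rewrite eq mulrC; lra.
  by rewrite ler_pM2r.
rewrite /= hx /= ler_norml; apply/andP; split; lra.
Unshelve. all: by end_near. Qed.
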